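(* Let $(U(n))_{n\geqslant 0}$ be an arithmetic progression of positive integers, $U(n)=U(0)+nd$ with $d$ an integer, and let $l$ be a positive integer. (i) Let $S(n)$ be the right-concatenation $\overline{U(0)U(1)\cdots U(n)}$. Then for every $n\geqslant 0$ such that $U(n+1)$, $U(n+2)$, $U(n+3)$ all have exactly $l$ decimal digits, $$S(n+3) - (10^l+2)\, S(n+2) + (2\cdot 10^l + 1)\, S(n+1) - 10^l\, S(n) = 0.$$ (ii) Let $S(n)$ be the left-concatenation $\overline{U(n)U(n-1)\cdots U(0)}$. Then for every $n\geqslant 0$ such that $U(n+1)$, $U(n+2)$, $U(n+3)$ all have exactly $l$ decimal digits, $$S(n+3) - (2\cdot 10^l + 1)\, S(n+2) + (10^{2l}+2\cdot 10^l)\, S(n+1) - 10^{2l}\, S(n) = 0.$$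
   Context: For positive integers $a_0,\ldots,a_k$, $\overline{a_0a_1\cdots a_k}$ denotes the integer whose decimal expansion is the decimal expansion of $a_0$ followed by that of $a_1$, ..., followed by that of $a_k$. Thus for the right-concatenation $S(n+1)=S(n)\cdot 10^{k}+U(n+1)$ with $k$ the number of digits of $U(n+1)$, and for the left-concatenation $S(n+1)=U(n+1)\cdot 10^{p}+S(n)$ with $p$ the number of digits of $S(n)$. *)

(* Defs.v *)
From mathcomp Require Import all_boot all_order all_algebra.
Set Implicit Arguments. Unset Strict Implicit. Unset Printing Implicit Defensive.
Import Order.TTheory GRing.Theory Num.Theory.

(* number of decimal digits of m (with the convention ndigits 0 = 1);
   fuel m is sufficient since m %/ 10 < m for m >= 10 *)
Fixpoint ndigits_rec (fuel m : nat) : nat :=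
  match fuel with
  | 0 => 1
  | f.+1 => if m < 10 then 1 else (ndigits_rec f (m %/ 10)).+1
  end.
Definition ndigits (m : nat) : nat := ndigits_rec m m.

Definition dconcat (a b : nat) : nat := a * 10 ^ ndigits b + b.

Fixpoint Sright (U : nat -> nat) (n : nat) : nat :=
  match n with
  | 0 => U 0
  | k.+1 => dconcat (Sright U k) (U k.+1)
  end.

Fixpoint Sleft (U : nat -> nat) (n : nat) : nat :=
  match n with
  | 0 => U 0
  | k.+1 => dconcat (U k.+1) (Sleft U k)
  end.

(* Main.v *)
Require Import Defs.
From mathcomp Require Import all_boot all_order all_algebra.
Import Order.TTheory GRing.Theory Num.Theory.
From mathcomp Require Import ring zify.

Lemma ndigits_rec_eq k : forall f m, (10 ^ k <= m < 10 ^ k.+1)%N -> (m <= f)%N ->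
  ndigits_rec f m = k.+1.
Proof.
elim: k => [|k IH] [|f] m /andP[h1 h2] hf /=.
- by rewrite expn0 in h1; lia.
- by rewrite expn1 in h2; rewrite h2.
- have := leq_trans (leq_trans (expn_gt0 10 k.+1) h1) hf; done.
- have h10 : (10 <= m)%N by apply: leq_trans h1; rewrite expnS; have := expn_gt0 10 k; lia.
  rewrite ltnNge h10 /= (IH f) //.
    rewrite expnS in h1 h2; rewrite expnS in h2.
    apply/andP; split.
      by rewrite leq_divRL // mulnC.
    by rewrite ltn_divLR // mulnC.
  have : (m %/ 10 < m)%N by rewrite ltn_Pdiv //; lia.
  lia.
Qed.

Lemma ndigits_log m : (0 < m)%N -> ndigits m = (trunc_log 10 m).+1.
Proof.
move=> hm; apply: ndigits_rec_eq => //.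
by rewrite trunc_log_ltn // andbT trunc_logP.
Qed.

Lemma ndigits_bounds m : (0 < m)%N -> (10 ^ (ndigits m).-1 <= m < 10 ^ ndigits m)%N.
Proof. by move=> hm; rewrite ndigits_log //= trunc_log_ltn // andbT trunc_logP. Qed.

Lemma ndigits_concat a b : (0 < a)%N -> (0 < b)%N ->
  ndigits (dconcat a b) = (ndigits a + ndigits b)%N.
Proof.
move=> ha hb; rewrite /dconcat.
have /andP[a1 a2] := ndigits_bounds a ha.
have /andP[b1 b2] := ndigits_bounds b hb.
have na : (0 < ndigits a)%N by rewrite (ndigits_log a ha).
have nb : (0 < ndigits b)%N by rewrite (ndigits_log b hb).
set i := ndigits a in a1 a2 na *; set j := ndigits b in b1 b2 nb *.
have -> : (i + j = (i.-1 + j).+1)%N by lia.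
apply: ndigits_rec_eq.
  have e1 : (10 ^ (i.-1 + j) = 10 ^ i.-1 * 10 ^ j)%N by rewrite expnD.
  have e2 : (10 ^ (i.-1 + j).+1 = 10 ^ i * 10 ^ j)%N.
    by rewrite -expnD; congr (_ ^ _); lia.
  rewrite e1 e2; apply/andP; split.
    by apply: leq_trans (leq_addr _ _); rewrite leq_mul2r a1 orbT.
  apply: (@leq_trans ((a + 1) * 10 ^ j)); first by rewrite mulnDl mul1n ltn_add2l.
  by rewrite leq_mul2r addn1 a2 orbT.
have : (0 < 10 ^ j)%N by rewrite expn_gt0.
nia.
Qed.
Local Open Scope ring_scope.
Lemma pz10 (k : nat) : ((10 ^ k)%N)%:Z = 10 ^+ k.
Proof. by rewrite -[LHS]natz natrX. Qed.
Lemma pzX a b c : ((a * b + c)%N)%:Z = a%:Z * b%:Z + c%:Z.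
Proof. by rewrite PoszD PoszM. Qed.

Lemma Sleft_pos U : (forall n, (0 < U n)%N) -> forall k, (0 < Sleft U k)%N.
Proof.
move=> hp; elim=> [|k IH] /=; first exact: hp.
rewrite /dconcat; have := hp k.+1; have := expn_gt0 10 (ndigits (Sleft U k)); nia.
Qed.

Theorem lemma2 (U : nat -> nat) (d : int) (l : nat)
  (hpos : forall n, (0 < U n)%N)
  (hAP : forall n, (U n)%:Z = (U 0)%:Z + n%:Z * d)
  (hl : (0 < l)%N) :
  (forall n : nat,
     ndigits (U n.+1) = l -> ndigits (U n.+2) = l -> ndigits (U n.+3) = l ->
     (Sright U n.+3)%:Z - (10 ^+ l + 2) * (Sright U n.+2)%:Z
       + (2 * 10 ^+ l + 1) * (Sright U n.+1)%:Z - 10 ^+ l * (Sright U n)%:Z = 0)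
  /\
  (forall n : nat,
     ndigits (U n.+1) = l -> ndigits (U n.+2) = l -> ndigits (U n.+3) = l ->
     (Sleft U n.+3)%:Z - (2 * 10 ^+ l + 1) * (Sleft U n.+2)%:Z
       + (10 ^+ (2 * l) + 2 * 10 ^+ l) * (Sleft U n.+1)%:Z
       - 10 ^+ (2 * l) * (Sleft U n)%:Z = 0).
Proof.
split=> n h1 h2 h3.
- have -> : Sright U n.+3 = (Sright U n.+2 * 10 ^ l + U n.+3)%N by rewrite /= /dconcat h3.
  have -> : Sright U n.+2 = (Sright U n.+1 * 10 ^ l + U n.+2)%N by rewrite /= /dconcat h2.
  have -> : Sright U n.+1 = (Sright U n * 10 ^ l + U n.+1)%N by rewrite /= /dconcat h1.
  rewrite !pzX !pz10 (hAP n.+1) (hAP n.+2) (hAP n.+3).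
  have e3 : (n.+3)%:Z = n%:Z + 3 by rewrite -addn3 PoszD.
  have e2 : (n.+2)%:Z = n%:Z + 2 by rewrite -addn2 PoszD.
  have e1 : (n.+1)%:Z = n%:Z + 1 by rewrite -addn1 PoszD.
  rewrite e3 e2 e1.
  ring.
- set p := ndigits (Sleft U n).
  have hS := @Sleft_pos U hpos.
  have d1 : ndigits (Sleft U n.+1) = (l + p)%N by rewrite /= ndigits_concat // h1.
  have d2 : ndigits (Sleft U n.+2) = (l + (l + p))%N
    by rewrite -[Sleft U n.+2]/(dconcat (U n.+2) (Sleft U n.+1)) ndigits_concat // h2 d1.
  have -> : Sleft U n.+3 = (U n.+3 * 10 ^ (l + (l + p)) + Sleft U n.+2)%N
    by rewrite [Sleft U n.+3]/= /dconcat d2.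
  have -> : Sleft U n.+2 = (U n.+2 * 10 ^ (l + p) + Sleft U n.+1)%N
    by rewrite [Sleft U n.+2]/= /dconcat d1.
  have -> : Sleft U n.+1 = (U n.+1 * 10 ^ p + Sleft U n)%N by [].
  have eL : (10:int) ^+ (2 * l) = 10 ^+ l * 10 ^+ l by rewrite -exprD; congr (_ ^+ _); lia.
  rewrite eL !pzX !pz10 !exprD (hAP n.+1) (hAP n.+2) (hAP n.+3).
  have e3 : (n.+3)%:Z = n%:Z + 3 by rewrite -addn3 PoszD.
  have e2 : (n.+2)%:Z = n%:Z + 2 by rewrite -addn2 PoszD.
  have e1 : (n.+1)%:Z = n%:Z + 1 by rewrite -addn1 PoszD.
  rewrite e3 e2 e1.
  ring.
Qed.
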